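(* Let $\lambda$ and $\lambda'$ be Young diagrams with $n$ boxes such that $\lambda'\ge\lambda$. Then $M_{\lambda',2l}\ge M_{\lambda,2l}$ for every integer $l\ge 0$.
   Context: For a Young diagram $\lambda=(\lambda_1,\dots,\lambda_m)$ with $\lambda_1\ge\dots\ge\lambda_m\ge 1$, $\sum\lambda_i=n$, and an integer $l\ge 0$, define $M_{\lambda,2l}=\sum_{j=1}^m\big\{(\lambda_j-j)^l(\lambda_j-j+1)^l-j^l(j-1)^l\big\}$. For Young diagrams $\lambda,\lambda'$ with $n$ boxes, $\lambda'\ge\lambda$ means that $\lambda'$ can be obtained from $\lambda$ by a finite sequence of moves, each of which removes the last box of some row $b$ and appends it to the end of some row $a<b$, every intermediate shape being a Young diagram (i.e. moving boxes up to the right; the dominance order). *)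

(* Defs.v *)
From HB Require Import structures.
From mathcomp Require Import all_boot all_order all_algebra.
From Stdlib Require Import Relations.
Set Implicit Arguments. Unset Strict Implicit. Unset Printing Implicit Defensive.
Import Order.TTheory GRing.Theory Num.Theory.

(* A Young diagram is the list of its row lengths [:: l_1; ...; l_m]
   (row j of the paper is index j-1 here), weakly decreasing, all rows >= 1. *)
Definition young (lam : seq nat) : bool :=
  sorted geq lam && all (fun r => 0 < r) lam.

Definition boxes (lam : seq nat) : nat := sumn lam.

(* M_{lam,2l} = sum_{j=1}^m ((lam_j - j)^l (lam_j - j + 1)^l - j^l (j-1)^l),
   computed in int; with 0-based index i = j - 1. *)
Definition M (lam : seq nat) (l : nat) : int :=
  \sum_(i < size lam)
    (((nth 0 lam i)%:Z - (i.+1)%:Z) ^+ l * ((nth 0 lam i)%:Z - i%:Z) ^+ l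
     - (i.+1)%:Z ^+ l * (i%:Z) ^+ l)%R.

(* One move: remove the last box of row b and append it to row a < b
   (0-based indices), the result being again a Young diagram.  Rows of
   length 0 are not stored, so a row emptied by the move disappears. *)
Definition move (lam lam' : seq nat) : Prop :=
  exists a b : nat, [/\ a < b, b < size lam, young lam' &
    forall i, nth 0 lam' i = nth 0 lam i + (i == a) - (i == b)].

Definition dom_ge (lam' lam : seq nat) : Prop :=
  clos_refl_trans_1n (seq nat) move lam lam'.

(* Main.v *)
Require Import Defs.
From HB Require Import structures.
From mathcomp Require Import all_boot all_order all_algebra.
From Stdlib Require Import Lia.
Import Order.TTheory GRing.Theory Num.Theory.
Local Open Scope ring_scope.

Lemma conv (A B C : int) (l : nat) : 0 <= A -> A <= B -> B <= C -> B - A <= C - B ->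
  B ^+ l - A ^+ l <= C ^+ l - B ^+ l.
Proof.
move=> A0 AB BC d.
have B0 : 0 <= B by apply: le_trans AB.
have C0 : 0 <= C by apply: le_trans BC.
have mono : forall k, A ^+ k <= B ^+ k /\ B ^+ k <= C ^+ k.
  by move=> k; split; apply: lerXn2r; rewrite ?nnegrE.
elim: l => [|l IH]; first by rewrite !expr0 !subrr.
have e1 : B ^+ l.+1 - A ^+ l.+1 = B * (B ^+ l - A ^+ l) + (B - A) * A ^+ l.
  by rewrite !exprS mulrBr mulrBl addrA subrK.
have e2 : C ^+ l.+1 - B ^+ l.+1 = C * (C ^+ l - B ^+ l) + (C - B) * B ^+ l.
  by rewrite !exprS mulrBr mulrBl addrA subrK.
rewrite e1 e2; apply: lerD.
  apply: ler_pM => //; rewrite subr_ge0; exact: (mono l).1.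
apply: ler_pM => //; first by rewrite subr_ge0.
  exact: exprn_ge0.
exact: (mono l).1.
Qed.

Definition g (l : nat) (c : int) : int := (c * (c + 1)) ^+ l.
Definition h (l : nat) (t : int) : int := g l t - g l (t - 1).

Lemma gsym l c : g l (-1 - c) = g l c.
Proof.
rewrite /g; congr (_ ^+ _).
by rewrite addrAC -[-1 + 1]/(0:int) add0r -[-1]/(- (1:int)) -opprD mulrNN mulrC addrC.
Qed.

Lemma hodd l t : h l (- t) = - h l t.
Proof.
have e1 : - t = -1 - (t - 1) by rewrite opprB addrA -[-1 + 1]/(0:int) add0r.
have e2 : - t - 1 = -1 - t by rewrite addrC.
by rewrite /h e2 {1}e1 !gsym opprB.
Qed.

Lemma gnat l k : g l k%:Z = ((k * k.+1) ^ l)%N%:Z.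
Proof. by rewrite /g -[1]/(1%:Z) -PoszD -PoszM -!natz -natrX addn1. Qed.

Lemma gnatp l k : g l (k%:Z - 1) = ((k.-1 * k) ^ l)%N%:Z.
Proof.
case: k => [|k]; first by rewrite /g -[(0%:Z - 1) * _]/(0%:Z) mul0n -!natz natrX.
have -> : (k.+1)%:Z - 1 = k%:Z by rewrite -addn1 PoszD addrK.
by rewrite gnat.
Qed.

Lemma PoszX (n l : nat) : ((n ^ l)%N)%:Z = (n%:Z) ^+ l.
Proof. by elim: l => [|l IH] //; rewrite expnS PoszM exprS IH. Qed.

Lemma hstep_nat l (k : nat) : h l k%:Z <= h l (k%:Z + 1).
Proof.
rewrite /h addrK.
have -> : k%:Z + 1 = k.+1%:Z by rewrite -addn1 PoszD.
rewrite !gnat gnatp !PoszX.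
have ab : (k.-1 * k <= k * k.+1)%N by rewrite leq_mul ?leq_pred ?leqnSn.
have bc : (k * k.+1 <= k.+1 * k.+2)%N by rewrite leq_mul ?leqnSn.
apply: conv => //; rewrite ?lez_nat // !subzn // lez_nat.
case: k ab bc => [|k] _ _ //.
apply/ssrnat.leP. rewrite -!multE -!minusE. nia.
Qed.

Lemma hstep l (t : int) : h l t <= h l (t + 1).
Proof.
case: t => [k|s]; first exact: hstep_nat.
have e1 : Negz s = - (s.+1%:Z) by [].
have e2 : Negz s + 1 = - (s%:Z) by rewrite e1 -addn1 PoszD opprD addrK.
rewrite e2 e1 !hodd lerN2.
have -> : s.+1%:Z = s%:Z + 1 by rewrite -addn1 PoszD.
exact: hstep_nat.
Qed.

Lemma hmono l (p q : int) : q <= p -> h l q <= h l p.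
Proof.
rewrite -subr_ge0 => /gez0_abs.
set k := `|p - q|%N => ek.
have -> : p = q + k%:Z by rewrite ek addrC subrK.
clear ek; elim: k => [|k IH]; first by rewrite addr0.
apply: le_trans IH _.
by rewrite -addn1 PoszD addrA hstep.
Qed.

Definition Fs l (v i : nat) : int :=
  ((v%:Z - (i.+1)%:Z) ^+ l * (v%:Z - i%:Z) ^+ l - (i.+1)%:Z ^+ l * (i%:Z) ^+ l)%R.

Lemma FsE l v i : Fs l v i = g l (v%:Z - i.+1%:Z) - g l i%:Z.
Proof.
have e : v%:Z - i.+1%:Z + 1 = v%:Z - i%:Z.
  by rewrite -addn1 PoszD opprD addrA subrK.
rewrite /Fs /g e !exprMn; congr (_ - _); rewrite mulrC -addn1 PoszD //.
Qed.

Lemma Fs0 l i : Fs l 0 i = 0.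
Proof.
rewrite FsE -[g l i%:Z]gsym; apply/eqP; rewrite subr_eq0; apply/eqP; congr g.
by rewrite sub0r -addn1 PoszD opprD addrC.
Qed.

Lemma Mwiden l lam N : (size lam <= N)%N ->
  M lam l = \sum_(i < N) Fs l (nth 0 lam i) i.
Proof.
move=> HN; rewrite /M (big_ord_widen N (fun i => Fs l (nth 0 lam i) i)) //.
rewrite big_mkcond; apply: eq_bigr => i _.
case: ifP => // /negbT; rewrite -leqNgt => Hi.
by rewrite nth_default // Fs0.
Qed.

Lemma move_le l lam lam' : young lam -> move lam lam' -> M lam l <= M lam' l.
Proof.
case/andP=> srt pos [a [b [ab bN y' Hn]]].
set N := size lam.
have aN : (a < N)%N by apply: ltn_trans ab bN.
have sz : (size lam' <= N)%N.
  rewrite leqNgt; apply/negP => H.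
  case/andP: y' => _ /allP pos'.
  have := pos' _ (mem_nth 0 H).
  rewrite Hn nth_default // (gtn_eqF aN) (gtn_eqF bN) //.
rewrite (Mwiden l _ _ (leqnn N)) (Mwiden l _ _ sz) -subr_ge0 -sumrB.
have vb : (0 < nth 0 lam b)%N by apply: (allP pos); apply: mem_nth.
have vab : (nth 0 lam b <= nth 0 lam a)%N.
  apply: (sorted_leq_nth _ _ 0 srt) => //; last exact: ltnW.
  - by move=> x y z /= H1 H2; apply: leq_trans H2 H1.
  - by move=> x /=.
rewrite (bigD1 (Ordinal aN)) //= (bigD1 (Ordinal bN)) /=; last by rewrite -val_eqE /= gtn_eqF.
rewrite big1 ?addr0; last first.
  move=> i /andP[ia ib]; rewrite Hn.
  rewrite -val_eqE /= in ia; rewrite -val_eqE /= in ib.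
  by rewrite (negbTE ia) (negbTE ib) addn0 subn0 subrr.
rewrite !Hn eqxx (ltn_eqF ab) (gtn_eqF ab) eqxx addn0 addn1 subn0 subn1.
move: vb vab; case: (nth 0 lam b) => // w _ vab.
set v := nth 0 lam a.
rewrite /= !FsE !opprB !addrA !subrK.
have e1 : g l (v.+1%:Z - a.+1%:Z) - g l (v%:Z - a.+1%:Z) = h l (v.+1%:Z - a.+1%:Z).
  by rewrite /h -addn1 PoszD addrAC addrK.
have e2 : g l (w%:Z - b.+1%:Z) = g l (w.+1%:Z - b.+1%:Z - 1).
  have -> : w.+1%:Z = w%:Z + 1 by rewrite -addn1 PoszD.
  by rewrite addrAC addrK.
rewrite e1 e2 -addrA -[g l (_ - 1) - _]opprB -/(h l _) subr_ge0.
apply: hmono; apply: lerB; rewrite lez_nat //; exact: ltnW.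
Qed.

Theorem lemma5p9 (n : nat) (lam lam' : seq nat) :
  young lam -> young lam' -> boxes lam = n -> boxes lam' = n ->
  dom_ge lam' lam ->
  forall l : nat, (M lam l <= M lam' l)%R.
Proof.
move=> ylam _ _ _ D l.
elim: D ylam => [x _|x y z mv _ IH yx]; first exact: lexx.
apply: le_trans (move_le l x y yx mv) _.
apply: IH.
by case: mv => [a [b [_ _ yy _]]].
Qed.
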